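(* Let $T$ be a quantizable map satisfying Condition 1 and let $U=U_\Bbbk$ be a quantization of $T$ with respect to a partition $\mathcal M_\Bbbk$ of size $N_\Bbbk$ from a sequence satisfying Condition 2. There is a constant $D(T)$, independent of $n$ and $N_\Bbbk$, such that for every $f\in\mathrm{Lip}(I_c)$ and every integer $n\geq1$, $$\|U^{-n}\mathrm{Op}_\Bbbk(f)U^{n}-\mathrm{Op}_\Bbbk(f\circ T^n)\|\leq D(T)\,\|f\|_{\mathrm{Lip}}\,\frac{\Lambda_{\max}^n}{N_\Bbbk},$$ where $\|\cdot\|$ is the operator norm and $\Lambda_{\max}=\max_j\Lambda_j$.
   Context: Condition 1: $T:[0,1]\to[0,1]$, integers $\Lambda_1,\dots,\Lambda_l\geq2$ with $\sum\Lambda_j^{-1}=1$, consecutive intervals $I_1,\dots,I_l$ with $|I_j|=\Lambda_j^{-1}$, and $T$ affine with slope $\Lambda_j$ on $I_j$ mapping $I_j$ onto $[0,1]$. $\mathcal M_\Bbbk$ is the partition of $[0,1]$ into $E_i=[(i-1)/N_\Bbbk,i/N_\Bbbk]$; Condition 2 for a sequence $(\mathcal M_\Bbbk)$: $N_{\Bbbk+1}/N_\Bbbk$ is an integer $>1$ and all endpoints of the $I_j$ are endpoints of $\mathcal M_1$. With $B_\Bbbk(i,j)=|E_i\cap T^{-1}E_j|/|E_i|$, a quantization is a unitary $N_\Bbbk\times N_\Bbbk$ matrix $U_\Bbbk$ with $B_\Bbbk(j,i)=|U_\Bbbk(i,j)|^2$ for all $i,j$; $T$ is quantizable if such $U_\Bbbk$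 exist for all $\Bbbk$ for some sequence satisfying Condition 2. $\mathrm{Op}_\Bbbk(f)$ is the diagonal matrix whose $(i,i)$ entry is the average $N_\Bbbk\int_{E_i}f\,dx$. $I_c$ is the circle obtained from $[0,1]$ by identifying $0$ and $1$, with distance $d(x,y)=\min\{|x-y|,|x-y-1|\}$ (for $x\geq y$ representatives in $[0,1]$); $\|f\|_{\mathrm{Lip}}=\sup_x|f(x)|+\sup_{x\neq y}|f(x)-f(y)|/d(x,y)$ and $\mathrm{Lip}(I_c)$ is the space of functions with finite Lipschitz norm. *)

(* Defs.v *)
From HB Require Import structures.
From mathcomp Require Import all_boot all_order all_algebra.
From mathcomp Require Import all_classical all_reals all_analysis.
From mathcomp.real_closed Require Import complex.

Set Implicit Arguments.
Unset Strict Implicit.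
Unset Printing Implicit Defensive.

Import Order.TTheory GRing.Theory Num.Theory.
Local Open Scope classical_set_scope.
Local Open Scope ring_scope.

(* a_j = sum_{k<j} 1/Lambda_k : left endpoint of I_{j} (0-based), a_l = 1. *)
Definition endpt (R : realType) (l : nat) (Lam : 'I_l -> nat) (j : nat) : R :=
  \sum_(k < l | (k < j)%N) ((Lam k)%:R)^-1.
Arguments endpt {R l} Lam j.

(* Condition 1.  T is affine of slope Lambda_j on the interior of
   I_j = [a_j, a_{j+1}] and maps it onto [0,1]; T maps [0,1] into [0,1]
   (the value at the finitely many breakpoints is unconstrained). *)
Definition cond1 (R : realType) (T : R -> R) (l : nat) (Lam : 'I_l -> nat) : Prop :=
  [/\ (forall j, (2 <= Lam j)%N),
      \sum_(j < l) ((Lam j)%:R)^-1 = 1 :> R,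
      (forall x : R, 0 <= x <= 1 -> 0 <= T x <= 1) &
      (forall (j : 'I_l) (x : R), endpt Lam j < x < endpt Lam j.+1 ->
          T x = (Lam j)%:R * (x - endpt Lam j))].

Definition cell (R : realType) (N : nat) (i : 'I_N) : set R :=
  [set x : R | (i%:R / N%:R <= x <= (i.+1)%:R / N%:R)].

Definition transB (R : realType) (T : R -> R) (N : nat) (i j : 'I_N) : R :=
  fine (lebesgue_measure (cell i `&` T @^-1` cell j)) /
  fine (lebesgue_measure (cell i)).

Definition cabs (R : realType) (z : R[i]) : R := ComplexField.Normc.normc z.

Definition unitary (R : realType) (N : nat) (U : 'M[R[i]]_N) : Prop :=
  U *m (map_mx (@conjc R) U)^T = 1%:M.

Definition is_quantization (R : realType) (T : R -> R) (N : nat)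
    (U : 'M[R[i]]_N) : Prop :=
  unitary U /\ forall i j : 'I_N, transB T j i = cabs (U i j) ^+ 2.

Definition cond2 (R : realType) (l : nat) (Lam : 'I_l -> nat) (N : nat -> nat) : Prop :=
  [/\ (0 < N 1)%N,
      (forall k, (1 <= k)%N -> (N k %| N k.+1)%N /\ (N k < N k.+1)%N) &
      (forall j, (j <= l)%N -> exists m : nat, endpt Lam j = m%:R / (N 1)%:R :> R)].

Definition quantizable (R : realType) (T : R -> R) (l : nat) (Lam : 'I_l -> nat) : Prop :=
  exists N : nat -> nat, cond2 R Lam N /\
    forall k, (1 <= k)%N -> exists U : 'M[R[i]]_(N k), is_quantization T U.

Definition Op (R : realType) (N : nat) (f : R -> R) : 'M[R[i]]_N :=
  \matrix_(i, j) (if i == j then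
     ((N%:R * Rintegral lebesgue_measure (cell i) f)%:C)%C else 0).

Definition mxpow (R : realType) (N : nat) (A : 'M[R[i]]_N) (n : nat) : 'M[R[i]]_N :=
  iter n (mulmx A) 1%:M.

Definition vnorm (R : realType) (N : nat) (v : 'cV[R[i]]_N) : R :=
  Num.sqrt (\sum_i cabs (v i 0) ^+ 2).

Definition opnorm (R : realType) (N : nat) (A : 'M[R[i]]_N) : R :=
  sup [set vnorm (A *m v) | v in [set v : 'cV[R[i]]_N | vnorm v <= 1]].

(* distance on the circle I_c, for representatives in [0,1] *)
Definition cdist (R : realType) (x y : R) : R := Order.min `|x - y| (1 - `|x - y|).

Definition unit_int (R : realType) : set R := [set x : R | 0 <= x <= 1].

Definition sup_part (R : realType) (f : R -> R) : set R :=
  [set `|f x| | x in @unit_int R].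

Definition lip_part (R : realType) (f : R -> R) : set R :=
  [set r | exists x y, [/\ @unit_int R x, @unit_int R y, cdist x y != 0 &
                          r = `|f x - f y| / cdist x y]].

Definition lipnorm (R : realType) (f : R -> R) : R :=
  sup (sup_part f) + sup (lip_part f).

(* f in Lip(I_c): a function on [0,1] with f 0 = f 1 (0 ~ 1 on the circle)
   and finite Lipschitz norm. *)
Definition in_Lip (R : realType) (f : R -> R) : Prop :=
  [/\ f 0 = f 1, has_ubound (sup_part f) & has_ubound (lip_part f)].

Definition Lam_max (l : nat) (Lam : 'I_l -> nat) : nat := \max_(j < l) Lam j.

(* Main.v *)
Require Import Defs.
From HB Require Import structures.
From mathcomp Require Import all_boot all_order all_algebra.
From mathcomp Require Import all_classical all_reals all_analysis.
From mathcomp.real_closed Require Import complex.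
From mathcomp Require Import ring lra.
From mathcomp Require Import zify.
From mathcomp Require Import measurable_realfun.

Import Order.TTheory GRing.Theory Num.Theory.
Set Implicit Arguments.
Unset Strict Implicit.
Unset Printing Implicit Defensive.
Local Open Scope ring_scope.

Section MX.
Variable R : realType.
Local Notation C := (R[i]).

Lemma cabsE (z : C) : ((cabs z)%:C)%C = `|z|. Proof. by []. Qed.

Lemma cabs_ge0 (z : C) : 0 <= cabs z.
Proof. by rewrite -lecR cabsE normr_ge0. Qed.

Lemma cabsM (a b : C) : cabs (a * b) = cabs a * cabs b.
Proof. by apply: complexI; rewrite rmorphM /= !cabsE normrM. Qed.

Lemma cabsD (a b : C) : cabs (a + b) <= cabs a + cabs b.
Proof. by rewrite -lecR rmorphD /= !cabsE ler_normD. Qed.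

Lemma cabsN (a : C) : cabs (- a) = cabs a.
Proof. by apply: complexI; rewrite !cabsE normrN. Qed.

Lemma cabs_sum (I : finType) (F : I -> C) : cabs (\sum_i F i) <= \sum_i cabs (F i).
Proof.
elim/big_rec2: _ => [|i y x _ H]; first by rewrite /cabs ComplexField.Normc.normc0.
by apply: le_trans (cabsD _ _) _; rewrite lerD2l.
Qed.

Lemma cabs2E (z : C) : (((cabs z) ^+ 2)%:C)%C = z * conjc z.
Proof. by rewrite rmorphXn /= cabsE normCK. Qed.

Lemma cabs_eq0 (z : C) : (cabs z == 0) = (z == 0).
Proof. by rewrite -(inj_eq (@complexI _)) cabsE /= normr_eq0. Qed.

Definition adj N (A : 'M[C]_N) := (map_mx conjc A)^T.

Definition sqn N (v : 'cV[C]_N) : R := \sum_i cabs (v i 0) ^+ 2.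

Lemma sqn_ge0 N (v : 'cV[C]_N) : 0 <= sqn v.
Proof. by apply: sumr_ge0 => i _; rewrite sqr_ge0. Qed.

Lemma vnormE N (v : 'cV[C]_N) : vnorm v = Num.sqrt (sqn v). Proof. by []. Qed.

Lemma vnorm_ge0 N (v : 'cV[C]_N) : 0 <= vnorm v.
Proof. exact: sqrtr_ge0. Qed.

Lemma sqnC N (v : 'cV[C]_N) : ((sqn v)%:C)%C = (((map_mx conjc v)^T *m v) 0 0).
Proof.
rewrite /sqn rmorph_sum /= !mxE; apply: eq_bigr => i _.
by rewrite cabs2E !mxE mulrC.
Qed.

Lemma unitary_adj N (U : 'M[C]_N) : unitary U -> adj U *m U = 1%:M.
Proof. by move=> H; apply: mulmx1C. Qed.

Lemma map_conj_mul N M P (A : 'M[C]_(N, M)) (B : 'M[C]_(M, P)) :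
  map_mx conjc (A *m B) = map_mx conjc A *m map_mx conjc B.
Proof. exact: map_mxM. Qed.

Lemma sqn_unitary N (U : 'M[C]_N) (v : 'cV[C]_N) :
  adj U *m U = 1%:M -> sqn (U *m v) = sqn v.
Proof.
move=> H; apply: (@complexI R); rewrite !sqnC map_conj_mul trmx_mul.
by rewrite -mulmxA (mulmxA _ U) -/(adj U) H mul1mx.
Qed.

Lemma adj_unitary N (U : 'M[C]_N) : unitary U -> adj (adj U) *m adj U = 1%:M.
Proof.
move=> H; rewrite /adj map_trmx trmxK.
have -> : map_mx conjc (map_mx conjc U) = U.
  by apply/matrixP => i j; rewrite !mxE conjcK.
exact: H.
Qed.

Lemma vnorm_unitary N (U : 'M[C]_N) (v : 'cV[C]_N) :
  adj U *m U = 1%:M -> vnorm (U *m v) = vnorm v.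
Proof. by move=> H; rewrite !vnormE sqn_unitary. Qed.

Lemma CS (I : finType) (x y : I -> R) :
  (\sum_i x i * y i) ^+ 2 <= (\sum_i x i ^+ 2) * (\sum_i y i ^+ 2).
Proof.
set A := \sum_i x i ^+ 2; set B := \sum_i y i ^+ 2; set D := \sum_i x i * y i.
have B0 : 0 <= B by apply: sumr_ge0 => i _; rewrite sqr_ge0.
have [Be|Bp] := eqVneq B 0.
  have y0 : forall i, y i = 0.
    move=> i; apply/eqP; rewrite -sqrf_eq0; apply/eqP.
    move: Be; rewrite /B => /eqP; rewrite psumr_eq0 => [/allP H|j _]; last by rewrite sqr_ge0.
    by apply/eqP; apply: H; rewrite mem_index_enum.
  rewrite /D (eq_bigr (fun _ => 0)) ?big1 // ?expr0n /= ?mulr_ge0 //.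
    by apply: sumr_ge0 => i _; rewrite sqr_ge0.
  by move=> i _; rewrite y0 mulr0.
have Bpos : 0 < B by rewrite lt_def Bp B0.
have H : 0 <= \sum_i (B * x i - D * y i) ^+ 2 by apply: sumr_ge0 => i _; rewrite sqr_ge0.
have E : \sum_i (B * x i - D * y i) ^+ 2 = B * (A * B - D ^+ 2).
  rewrite (eq_bigr (fun i => B^+2 * x i ^+ 2 - (2 * B * D) * (x i * y i) + D ^+ 2 * y i ^+ 2)); last first.
    by move=> i _; rewrite sqrrB; ring.
  rewrite big_split /= big_split /= sumrN -!mulr_sumr -/A -/B -/D; ring.
rewrite E in H; rewrite -subr_ge0.
by rewrite -(pmulr_rge0 _ Bpos).
Qed.

Lemma sqrt_sum_le (a b : R) : 0 <= a -> 0 <= b ->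
  Num.sqrt a * Num.sqrt b = Num.sqrt (a * b).
Proof. by move=> a0 b0; rewrite sqrtrM. Qed.

Lemma vnormD N (a b : 'cV[C]_N) : vnorm (a + b) <= vnorm a + vnorm b.
Proof.
rewrite !vnormE.
have h1 : sqn (a + b) <= \sum_i (cabs (a i 0) + cabs (b i 0)) ^+ 2.
  apply: ler_sum => i _; rewrite mxE; apply: lerXn2r; rewrite ?nnegrE ?addr_ge0 ?cabs_ge0 //.
  exact: cabsD.
have h2 : \sum_i (cabs (a i 0) + cabs (b i 0)) ^+ 2 <= (Num.sqrt (sqn a) + Num.sqrt (sqn b)) ^+ 2.
  rewrite (eq_bigr (fun i => cabs (a i 0) ^+ 2 + cabs (b i 0) ^+ 2 + 2 * (cabs (a i 0) * cabs (b i 0)))); last by move=> i _; rewrite sqrrD; ring.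
  have hs : \sum_i cabs (a i 0) * cabs (b i 0) <= Num.sqrt (sqn a) * Num.sqrt (sqn b).
    rewrite -sqrtrM ?sqn_ge0 //.
    apply: (le_trans (ler_norm _)).
    rewrite -(@ler_pXn2r _ 2) ?nnegrE ?normr_ge0 ?sqrtr_ge0 // sqr_sqrtr; last first.
      by apply: mulr_ge0; apply: sqn_ge0.
    by rewrite real_normK ?num_real // CS.
  rewrite big_split big_split /= -mulr_sumr -/(sqn a) -/(sqn b) sqrrD !sqr_sqrtr ?sqn_ge0 //.
  rewrite mulr2n; lra.
rewrite -(@ler_pXn2r _ 2) ?nnegrE ?addr_ge0 ?sqrtr_ge0 // sqr_sqrtr ?sqn_ge0 //.
exact: le_trans h1 h2.
Qed.

End MX.

Section MX2.
Variable R : realType.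
Local Notation C := (R[i]).

Lemma row_unit N (U : 'M[C]_N) m : unitary U -> \sum_j cabs (U m j) ^+ 2 = 1.
Proof.
rewrite /unitary => H; apply: (@complexI R); rewrite rmorph_sum rmorph1 /=.
have := congr1 (fun M : 'M[C]_N => M m m) H; rewrite !mxE eqxx mulr1n => <-.
by apply: eq_bigr => j _; rewrite cabs2E !mxE.
Qed.

Lemma sqrt_nat_le (c : nat) : Num.sqrt (c%:R : R) <= c%:R.
Proof.
case: c => [|c]; first by rewrite sqrtr0.
rewrite -(@ler_pXn2r _ 2) ?nnegrE ?sqrtr_ge0 ?ler0n // sqr_sqrtr ?ler0n //.
rewrite expr2 ler_peMr ?ler0n // ler1n //.
Qed.

Lemma step_mx N (U : 'M[C]_N) (d d' : 'I_N -> C) (W : R) (c : nat) :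
  unitary U -> 0 <= W ->
  (forall m j, U m j != 0 -> cabs (d m - d' j) <= W) ->
  (forall j, (#|[set m | U m j != 0%R]| <= c)%N) ->
  forall v, vnorm ((adj U *m diag_mx (\row_i d i) *m U - diag_mx (\row_i d' i)) *m v)
            <= c%:R * W * vnorm v.
Proof.
move=> uU W0 Hd Hc v.
set F := diag_mx (\row_i d i) *m U - U *m diag_mx (\row_i d' i).
have EF : adj U *m diag_mx (\row_i d i) *m U - diag_mx (\row_i d' i) = adj U *m F.
  by rewrite /F mulmxBr !mulmxA unitary_adj // mul1mx.
rewrite EF -mulmxA vnorm_unitary; last exact: adj_unitary.
have Fv : forall m, (F *m v) m 0 = \sum_j (U m j * (d m - d' j) * v j 0).
  move=> m; rewrite mxE; apply: eq_bigr => j _.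
  by rewrite /F mul_diag_mx mul_mx_diag !mxE; ring.
have key : sqn (F *m v) <= (c%:R * W ^+ 2) * sqn v.
  rewrite /sqn.
  apply: (@le_trans _ _ (\sum_m (\sum_j cabs (U m j) * (W * (U m j != 0)%:R * cabs (v j 0))) ^+ 2)).
    apply: ler_sum => m _; rewrite Fv.
    apply: lerXn2r; rewrite ?nnegrE ?cabs_ge0 //.
      by apply: sumr_ge0 => j _; rewrite !mulr_ge0 ?cabs_ge0 ?ler0n.
    apply: le_trans (cabs_sum _) _; apply: ler_sum => j _.
    have [->|nz] := eqVneq (U m j) 0.
      by rewrite !mul0r /cabs ComplexField.Normc.normc0 mul0r.
    rewrite /= mulr1 !cabsM -mulrA; apply: ler_wpM2l; first exact: cabs_ge0.
    by apply: ler_wpM2r; [exact: cabs_ge0| exact: Hd].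
  apply: (@le_trans _ _ (\sum_m \sum_j (W ^+ 2 * (U m j != 0)%:R * cabs (v j 0) ^+ 2))).
    apply: ler_sum => m _.
    apply: le_trans (CS _ _) _.
    rewrite row_unit // mul1r; apply: ler_sum => j _.
    rewrite !exprMn; case: (U m j != 0) => /=; by rewrite ?expr1n ?expr0n /= ?mulr0 ?mul0r.
  rewrite exchange_big /= mulr_sumr; apply: ler_sum => j _.
  rewrite -!mulr_suml.
  have -> : \sum_m W ^+ 2 * (U m j != 0)%:R = W ^+ 2 * #|[set m | U m j != 0]|%:R.
    rewrite -mulr_sumr; congr (_ * _).
    rewrite (eq_bigr (fun m => if m \in [set m | U m j != 0] then 1 else 0)); last first.
      by move=> m _; rewrite inE; case: (U m j != 0).
    by rewrite -big_mkcond sumr_const.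
  have hk : (#|[set m | U m j != 0]|%:R : R) <= c%:R by rewrite ler_nat; exact: Hc.
  have x0 : 0 <= cabs (v j 0) ^+ 2 by rewrite sqr_ge0.
  have w0 : 0 <= W ^+ 2 by rewrite sqr_ge0.
  rewrite (_ : c%:R * W ^+ 2 * cabs (v j 0) ^+ 2 = W^+2 * (c%:R * cabs (v j 0)^+2)); last by ring.
  rewrite -subr_ge0.
  set k := (#|[set m | U m j != 0]|%:R : R) in hk *.
  have e : forall a b : R, W ^+ 2 * (a * cabs (v j 0) ^+ 2) = (W ^+ 2 * a) * cabs (v j 0) ^+ 2 by move=> a b; ring.
  rewrite (_ : _ - _ = W ^+ 2 * ((c%:R - k) * cabs (v j 0) ^+ 2)); last by ring.
  by apply: mulr_ge0 => //; apply: mulr_ge0 => //; rewrite subr_ge0.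
rewrite vnormE.
apply: le_trans (ler_wsqrtr key) _.
rewrite sqrtrM ?mulr_ge0 ?sqr_ge0 ?ler0n // sqrtrM ?ler0n // sqrtr_sqr (ger0_norm W0) -vnormE.
exact: (ler_wpM2r (vnorm_ge0 v) (ler_wpM2r W0 (sqrt_nat_le c))).
Qed.
End MX2.

Section TEL.
Variable R : realType.
Local Notation C := (R[i]).

Lemma invmx_unitary N (U : 'M[C]_N) : unitary U -> invmx U = adj U.
Proof.
move=> H; have [uU _] := mulmx1_unit H.
by rewrite -[invmx U]mulmx1 -H mulmxA mulVmx // mul1mx.
Qed.

Lemma mxpowS N (A : 'M[C]_N) n : mxpow A n.+1 = A *m mxpow A n. Proof. by []. Qed.

Lemma mxpowSr N (A : 'M[C]_N) n : mxpow A n.+1 = mxpow A n *m A.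
Proof.
elim: n => [|n IH]; first by rewrite /mxpow /= mulmx1 mul1mx.
by rewrite [LHS]mxpowS [in LHS]IH mulmxA.
Qed.

Lemma sqn_pow N (A : 'M[C]_N) n v : adj A *m A = 1%:M -> sqn (mxpow A n *m v) = sqn v.
Proof.
move=> H; elim: n => [|n IH]; first by rewrite /mxpow /= mul1mx.
by rewrite mxpowS -mulmxA sqn_unitary // IH.
Qed.

Lemma vnorm_pow N (A : 'M[C]_N) n v : adj A *m A = 1%:M -> vnorm (mxpow A n *m v) = vnorm v.
Proof. by move=> H; rewrite !vnormE sqn_pow. Qed.

Lemma Op_ext N (f g : R -> R) : f =1 g -> Op N f = Op N g.
Proof. by move=> H; rewrite (funext H). Qed.

Lemma telescope N (U : 'M[C]_N) (tau : R -> R) (P : R -> (R -> R) -> Prop) (s L : R) :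
  unitary U -> 0 <= s ->
  (forall K g, P K g -> 0 <= K) ->
  (forall K g, P K g -> P (K * L) (g \o tau)) ->
  (forall K g, P K g -> forall v,
     vnorm ((adj U *m Op N g *m U - Op N (g \o tau)) *m v) <= s * K * vnorm v) ->
  forall n K g, P K g -> forall v,
    vnorm ((mxpow (adj U) n *m Op N g *m mxpow U n - Op N (g \o iter n tau)) *m v)
      <= s * K * (\sum_(k < n) L ^+ k) * vnorm v.
Proof.
move=> uU s0 PK Pstep Hstep n; elim: n => [|n IH] K g HP v.
  rewrite /mxpow /= mul1mx mulmx1 big_ord0 mulr0 mul0r.
  have -> : Op N (g \o iter 0 tau) = Op N g by [].
  by rewrite subrr mul0mx /vnorm /sqn big1 ?sqrtr0 // => i _; rewrite mxE /cabs ComplexField.Normc.normc0 expr0n.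
have HV : adj (adj U) *m adj U = 1%:M by apply: adj_unitary.
have HU : adj U *m U = 1%:M by apply: unitary_adj.
set V := adj U.
set G' := Op N (g \o tau).
have E : mxpow V n.+1 *m Op N g *m mxpow U n.+1 - Op N (g \o iter n.+1 tau) =
   mxpow V n *m ((V *m Op N g *m U - G') *m mxpow U n) +
   (mxpow V n *m G' *m mxpow U n - Op N ((g \o tau) \o iter n tau)).
  rewrite (@Op_ext N (g \o iter n.+1 tau) ((g \o tau) \o iter n tau)); last by [].
  rewrite mxpowSr mxpowS mulmxBl mulmxBr !mulmxA.
  by rewrite addrA subrK.
rewrite E mulmxDl.
apply: le_trans (vnormD _ _) _.
rewrite -!mulmxA vnorm_pow // !mulmxA.
rewrite -(mulmxA (_ - _)).
apply: le_trans (lerD (Hstep K g HP (mxpow U n *m v)) (IH _ _ (Pstep K g HP) v)) _.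
rewrite vnorm_pow //.
have -> : \sum_(k < n.+1) L ^+ k = 1 + L * \sum_(k < n) L ^+ k.
  rewrite big_ord_recl expr0 mulr_sumr; congr (_ + _); apply: eq_bigr => k _.
  by rewrite lift0 exprS.
rewrite le_eqVlt; apply/orP; left; apply/eqP; ring.
Qed.
End TEL.

Local Open Scope classical_set_scope.
Section MEAS.
Variable R : realType.
Local Notation mu := (@lebesgue_measure R).

Lemma cellE N (i : 'I_N) : cell i = `[(i%:R / N%:R : R), (i.+1%:R / N%:R)].
Proof. by rewrite set_itvcc. Qed.

Lemma cell_meas N (i : 'I_N) : measurable (cell i : set R).
Proof. by rewrite cellE; exact: measurable_itv. Qed.

Lemma cell_mu N (i : 'I_N) : mu (cell i) = ((N%:R : R)^-1)%:E.
Proof.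
have N0 : (0 < N)%N by case: i => /= k; case: N => //.
rewrite cellE lebesgue_measure_itv /= lte_fin ltr_pM2r ?invr_gt0 ?ltr0n // ltr_nat ltnS leqnn.
congr (_%:E); rewrite -mulrBl -natrB // subSnn mul1r //.
Qed.

Lemma cell_fine N (i : 'I_N) : fine (mu (cell i)) = (N%:R : R)^-1.
Proof. by rewrite cell_mu. Qed.

Lemma cell_sub N (i : 'I_N) (x : R) : cell i x -> 0 <= x <= 1.
Proof.
have N0 : (0 < N%:R :> R) by rewrite ltr0n; exact: (leq_ltn_trans (leq0n _) (ltn_ord i)).
rewrite /cell /= => /andP[h1 h2]; apply/andP; split.
  by apply: le_trans h1; rewrite divr_ge0 ?ler0n // ltW.
apply: le_trans h2 _; rewrite ler_pdivrMr // mul1r ler_nat; exact: ltn_ord.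
Qed.

Lemma cell_compact N (i : 'I_N) : compact (cell i : set R^o).
Proof. by rewrite cellE; exact: segment_compact. Qed.

Lemma lip_within (A : set R^o) (phi : R -> R^o) (M : R) :
  (forall x y, A x -> A y -> `|phi x - phi y| <= M * `|x - y|) ->
  {within A, continuous phi}.
Proof.
move=> H; apply/(@subspace_continuousP R^o A R^o phi) => x Ax.
apply/cvgrPdist_lt => e e0.
set M' := `|M| + 1.
have M'0 : 0 < M' by rewrite /M' ltr_pwDr ?normr_ge0.
rewrite near_withinE; near=> y => Ay.
apply: (le_lt_trans (H x y Ax Ay)).
apply: (le_lt_trans (y := M' * `|x - y|)).
  apply: ler_wpM2r; first exact: normr_ge0.
  by rewrite /M' (le_trans (ler_norm M)) // lerDl.
rewrite -ltr_pdivlMl //.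
near: y; apply/nbhs_ballP; exists (e / M'); first by rewrite /= divr_gt0.
by move=> y /=; rewrite /ball /= mulrC.
Unshelve. all: by end_near.
Qed.

Lemma cst_integrable N (i : 'I_N) (r : R) : mu.-integrable (cell i) (EFin \o (fun _ : R => r)).
Proof.
have c : {within (cell i : set R^o), continuous (fun _ : R => (r : R^o))}.
  by apply: continuous_subspaceT => x; exact: cst_continuous.
exact: (continuous_compact_integrable (@cell_compact N i) c).
Qed.

Lemma lip_integrable N (i : 'I_N) (phi : R -> R) (M : R) :
  (forall x y, cell i x -> cell i y -> `|phi x - phi y| <= M * `|x - y|) ->
  mu.-integrable (cell i) (EFin \o phi).
Proof.
move=> H; exact: (continuous_compact_integrable (@cell_compact N i) (lip_within H)).
Qed.

Lemma avg_bound N (i : 'I_N) (phi : R -> R) (M c e : R) :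
  (forall x y, cell i x -> cell i y -> `|phi x - phi y| <= M * `|x - y|) ->
  (forall x, cell i x -> `|phi x - c| <= e) ->
  `|N%:R * Rintegral mu (cell i) phi - c| <= e.
Proof.
move=> Hl He.
have N0 : (0 < N%:R :> R) by rewrite ltr0n; exact: (leq_ltn_trans (leq0n _) (ltn_ord i)).
have ip := lip_integrable Hl.
have lo : Rintegral mu (cell i) (fun _ => c - e) <= Rintegral mu (cell i) phi.
  apply: le_Rintegral => //; [exact: cell_meas|exact: cst_integrable|].
  by move=> x cx; have := He x cx; rewrite ler_distl => /andP[].
have hi : Rintegral mu (cell i) phi <= Rintegral mu (cell i) (fun _ => c + e).
  apply: le_Rintegral => //; [exact: cell_meas|exact: cst_integrable|].
  by move=> x cx; have := He x cx; rewrite ler_distl => /andP[].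
rewrite !Rintegral_cst ?cell_fine in lo hi; try exact: cell_meas.
rewrite ler_distl; apply/andP; split.
  have := ler_wpM2l (ltW N0) lo; rewrite mulrCA divff ?gt_eqF // mulr1.
  by [].
have := ler_wpM2l (ltW N0) hi; rewrite [X in _ <= X]mulrCA divff ?gt_eqF // mulr1.
by [].
Qed.

End MEAS.

Local Open Scope classical_set_scope.

Definition ILip (R : realType) (K : R) (g : R -> R) :=
  g 0 = g 1 /\ forall x y, 0 <= x <= 1 -> 0 <= y <= 1 -> `|g x - g y| <= K * `|x - y|.

Section GEN.
Variable R : realType.

Lemma lipS_ge0 (f : R -> R) : in_Lip f -> 0 <= sup (lip_part f).
Proof.
case=> _ _ hub.
have e : lip_part f (`|f 0 - f (2^-1)| / cdist 0 (2^-1)).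
  have h2 : unit_int (2^-1 : R).
    have q1 : (0 : R) <= 2^-1 by lra.
    have q2 : (2^-1 : R) <= 1 by lra.
    by rewrite /unit_int /= q1 q2.
  exists 0, (2^-1); split => //.
  - by rewrite /unit_int /= lexx ler01.
  - rewrite /cdist sub0r normrN ger0_norm ?invr_ge0 ?ler0n //.
    have -> : 1 - 2^-1 = 2^-1 :> R by field.
    by rewrite minxx invr_eq0 pnatr_eq0.
apply: le_trans (ub_le_sup hub e).
rewrite divr_ge0 // /cdist le_min normr_ge0 subr_ge0 /= sub0r normrN ger0_norm ?invr_ge0 ?ler0n //.
lra.
Qed.

Lemma lipS_le (f : R -> R) : in_Lip f -> sup (lip_part f) <= lipnorm f.
Proof.
case=> _ hs _; rewrite /lipnorm lerDr.
have e : sup_part f `|f 0| by exists 0 => //; rewrite /unit_int /= lexx ler01.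
exact: le_trans (normr_ge0 _) (ub_le_sup hs e).
Qed.

Lemma ILip_f (f : R -> R) : in_Lip f -> ILip (sup (lip_part f)) f.
Proof.
move=> hL; have S0 := lipS_ge0 hL; case: hL => f01 _ hub; split => // x y hx hy.
have [cd0|cdn] := eqVneq (cdist x y) 0.
  move: cd0; rewrite /cdist.
  have [xy|xy] := leP `|x - y| (1 - `|x - y|); move=> /eqP.
    rewrite normr_eq0 subr_eq0 => /eqP ->; by rewrite !subrr normr0 mulr0.
  rewrite subr_eq0 => /eqP h1.
  move: hx hy => /andP[x0 x1] /andP[y0 y1].
  have [ex|ex] : (x = 0 /\ y = 1) \/ (x = 1 /\ y = 0).
    move: h1; have [xy'|xy'] := leP x y.
      rewrite ler0_norm ?subr_le0 // => h; left; split; lra.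
    rewrite gtr0_norm ?subr_gt0 // => h; right; split; lra.
  - by case: ex => -> ->; rewrite f01 subrr normr0 mulr_ge0.
  - by case: ex => -> ->; rewrite f01 subrr normr0 mulr_ge0.
have e : lip_part f (`|f x - f y| / cdist x y) by exists x, y.
have cd0 : 0 < cdist x y.
  rewrite lt_def cdn /= /cdist le_min normr_ge0 /=.
  move: hx hy => /andP[x0 x1] /andP[y0 y1].
  rewrite subr_ge0; have [xy'|xy'] := leP x y.
    by rewrite ler0_norm ?subr_le0 //; lra.
  by rewrite gtr0_norm ?subr_gt0 //; lra.
have := ub_le_sup hub e; rewrite ler_pdivrMr // => h.
apply: le_trans h _; apply: ler_wpM2l => //.
by rewrite /cdist ge_min lexx.
Qed.

End GEN.

Local Open Scope classical_set_scope.

Section DYN.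
Variable R : realType.
Variable T : R -> R.
Variable l : nat.
Variable Lam : 'I_l -> nat.
Hypothesis H1 : cond1 T Lam.
Local Notation a := (endpt (R:=R) Lam).

Lemma Lam_ge2 j : (2 <= Lam j)%N. Proof. by case: H1. Qed.
Lemma Lam_gt0 j : (0 : R) < (Lam j)%:R.
Proof. by rewrite ltr0n (leq_trans _ (Lam_ge2 j)). Qed.
Lemma Lam_le j : (Lam j <= Lam_max Lam)%N.
Proof. by rewrite /Lam_max; exact: (leq_bigmax j). Qed.
Lemma sumLam : \sum_(j < l) ((Lam j)%:R)^-1 = 1 :> R. Proof. by case: H1. Qed.
Lemma l_gt0 : (0 < l)%N.
Proof.
rewrite lt0n; apply/negP => /eqP l0.
have : \sum_(j < l) ((Lam j)%:R)^-1 = (0 : R).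
  by apply: big1 => j _; exfalso; have := ltn_ord j; rewrite [X in (_ < X)%N]l0.
by rewrite sumLam => /eqP; rewrite oner_eq0.
Qed.
Lemma Lmax_ge2 : (2 <= Lam_max Lam)%N.
Proof. exact: leq_trans (Lam_ge2 (Ordinal l_gt0)) (Lam_le _). Qed.

Lemma a0 : a 0 = 0. Proof. by rewrite /endpt big_pred0. Qed.
Lemma al : a l = 1.
Proof. by rewrite /endpt (eq_bigl xpredT) ?sumLam // => k; rewrite ltn_ord. Qed.
Lemma aS (j : 'I_l) : a j.+1 = a j + ((Lam j)%:R)^-1.
Proof.
rewrite /endpt (bigD1 j) ?ltnSn //= addrC; congr (_ + _).
apply: eq_bigl => k; rewrite ltnS -val_eqE /=.
by case: ltngtP.
Qed.
Lemma a_le j j' : (j <= j')%N -> a j <= a j'.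
Proof.
move=> hj; rewrite /endpt big_mkcond [X in _ <= X]big_mkcond; apply: ler_sum => k _.
case: ifP => h; first by rewrite (leq_trans h hj).
by case: ifP => _ //; rewrite invr_ge0 ler0n.
Qed.
Lemma a_lt (j : 'I_l) j' : (j < j')%N -> a j < a j'.
Proof.
move=> hj; apply: lt_le_trans (a_le hj); rewrite aS ltrDl invr_gt0; exact: Lam_gt0.
Qed.

Lemma branch_ex x : 0 <= x <= 1 -> exists p : 'I_l, a p <= x <= a p.+1.
Proof.
move=> /andP[x0 x1].
suff H : forall j, (j.+1 <= l)%N -> x <= a j.+1 -> exists p : 'I_l, a p <= x <= a p.+1.
  by apply: (H l.-1); rewrite prednK ?l_gt0 // al.
elim=> [|j IH] hj hx.
  by exists (Ordinal hj) => /=; rewrite a0 x0 hx.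
have [hle|hlt] := leP x (a j.+1).
  by apply: IH => //; exact: ltnW.
by exists (Ordinal hj) => /=; rewrite hx (ltW hlt).
Qed.

Definition Pt : set R := [set x | exists j : 'I_l.+1, x = a j].
Definition tau (x : R) : R := if pselect (Pt x) then 0 else T x.

Lemma notP_int (p : 'I_l) x : a p < x < a p.+1 -> ~ Pt x.
Proof.
move=> /andP[h1 h2] [j ej]; rewrite ej in h1 h2.
have [hjp|hjp] := leqP j p.
  by have := a_le hjp; rewrite leNgt h1.
by have := a_le hjp; rewrite leNgt h2.
Qed.

Lemma Pt_a (j : 'I_l.+1) : Pt (a j). Proof. by exists j. Qed.
Lemma Pt0 : Pt 0. Proof. by exists ord0; rewrite a0. Qed.
Lemma Pt1 : Pt 1. Proof. by exists ord_max; rewrite al. Qed.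
Lemma tau0 : tau 0 = 0. Proof. by rewrite /tau; case: pselect => // h; exfalso; exact: h Pt0. Qed.
Lemma tau1 : tau 1 = 0. Proof. by rewrite /tau; case: pselect => // h; exfalso; exact: h Pt1. Qed.

Lemma tau_notP x : ~ Pt x -> tau x = T x.
Proof. by rewrite /tau; case: pselect. Qed.

Lemma T_int (p : 'I_l) x : a p < x < a p.+1 -> T x = (Lam p)%:R * (x - a p).
Proof. by case: H1 => _ _ _ h; apply: h. Qed.

Lemma tau_int (p : 'I_l) x : a p < x < a p.+1 -> tau x = (Lam p)%:R * (x - a p).
Proof. move=> h; rewrite tau_notP; first exact: T_int. exact: (notP_int h). Qed.

Lemma branch_range (p : 'I_l) x : a p <= x <= a p.+1 -> 0 <= (Lam p)%:R * (x - a p) <= 1.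
Proof.
move=> /andP[h1 h2]; have L0 := Lam_gt0 p.
apply/andP; split; first by apply: mulr_ge0; rewrite ?subr_ge0 // ltW.
rewrite -ler_pdivlMl // mulr1 lerBlDl -aS //.
Qed.

Lemma tau_branch (g : R -> R) (p : 'I_l) x : g 0 = g 1 -> a p <= x <= a p.+1 ->
  g (tau x) = g ((Lam p)%:R * (x - a p)).
Proof.
move=> g01 /andP[h1 h2].
have L0 := Lam_gt0 p.
have [e1|n1] := eqVneq x (a p).
  rewrite e1 subrr mulr0 /tau; case: pselect => // hn.
  by exfalso; apply: hn; exact: (Pt_a (widen_ord (leqnSn l) p)).
have [e2|n2] := eqVneq x (a p.+1).
  have -> : (Lam p)%:R * (x - a p) = 1.
    by rewrite e2 aS addrC addKr divff // gt_eqF.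
  rewrite -g01 /tau; case: pselect => // hn.
  by exfalso; apply: hn; rewrite e2; exact: (Pt_a (@Ordinal l.+1 p.+1 (ltn_ord p))).
rewrite (@tau_int p) //; apply/andP; split.
  by rewrite lt_def n1 h1.
by rewrite lt_def eq_sym n2 h2.
Qed.

Lemma tau_range x : 0 <= x <= 1 -> 0 <= tau x <= 1.
Proof.
move=> hx; rewrite /tau; case: pselect => hh; first by rewrite lexx ler01.
by case: H1 => _ _ h _; apply: h.
Qed.

Lemma ILip_tau (K : R) (g : R -> R) : 0 <= K -> ILip K g ->
  ILip (K * (Lam_max Lam)%:R) (g \o tau).
Proof.
move=> K0 [g01 gL]; set M := K * (Lam_max Lam)%:R.
have M0 : 0 <= M by rewrite mulr_ge0 ?ler0n.
split; first by rewrite /= tau0 tau1.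
pose Lp u v := forall x y, u <= x -> x <= y -> y <= v ->
  `|g (tau y) - g (tau x)| <= M * (y - x).
have piece : forall p : 'I_l, Lp (a p) (a p.+1).
  move=> p x y hx hxy hy.
  have bx : a p <= x <= a p.+1 by rewrite hx (le_trans hxy hy).
  have by_ : a p <= y <= a p.+1 by rewrite hy (le_trans hx hxy).
  rewrite (tau_branch g01 bx) (tau_branch g01 by_).
  apply: le_trans (gL _ _ (branch_range by_) (branch_range bx)) _.
  have e : (Lam p)%:R * (y - a p) - (Lam p)%:R * (x - a p) = (Lam p)%:R * (y - x) :> R by ring.
  rewrite e normrM ger0_norm ?ler0n //.
  rewrite ger0_norm ?subr_ge0 // /M -mulrA; apply: ler_wpM2l => //.
  apply: ler_wpM2r; first by rewrite subr_ge0.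
  by rewrite ler_nat; exact: Lam_le.
have glue : forall u v w, Lp u v -> Lp v w -> Lp u w.
  move=> u v w h1 h2 x y hx hxy hy.
  have [yv|vy] := leP y v; first exact: h1.
  have [vx|xv] := leP v x; first exact: h2.
  have d := ler_distD (g (tau v)) (g (tau y)) (g (tau x)).
  have e1 := h2 v y (lexx v) (ltW vy) hy.
  have e2 := h1 x v hx (ltW xv) (lexx v).
  apply: le_trans d _; apply: le_trans (lerD e1 e2) _.
  rewrite -mulrDr; apply: ler_wpM2l => //; lra.
have full : forall j, (j <= l)%N -> Lp 0 (a j).
  elim=> [|j IH] hj.
    move=> x y hx hxy hy; rewrite a0 in hy.
    have -> : y = x by apply/eqP; rewrite eq_le hxy (le_trans hy hx).
    by rewrite !subrr normr0 mulr0.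
  have hj' : (j < l)%N by [].
  apply: (glue _ (a j)); first exact: IH (ltnW hj).
  exact: (piece (Ordinal hj')).
move=> x y hx hy /=.
have F := full l (leqnn l); rewrite al in F.
move: hx hy => /andP[x0 x1] /andP[y0 y1].
have [xy|xy] := leP x y.
  rewrite distrC (distrC x) (ger0_norm (x:= y - x)) ?subr_ge0 //.
  exact: F.
rewrite (ger0_norm (x := x - y)); last by rewrite subr_ge0 ltW.
exact: (F y x y0 (ltW xy) x1).
Qed.


Lemma countable_Pt : countable Pt.
Proof.
apply: (sub_countable (B := [set a (nat_of_ord j) | j in [set: 'I_l.+1]])).
  by apply: subset_card_le => x [j ->]; exists j.
apply: (sub_countable (card_image_le _ _)); exact: countableP.
Qed.

Lemma transB_pos N (j m : 'I_N) : transB T j m != 0 ->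
  exists x0, [/\ cell j x0, ~ Pt x0 & cell m (T x0)].
Proof.
move=> hB; apply: contrapT => hno.
move/eqP: hB; apply; rewrite /transB.
have -> : lebesgue_measure (cell j `&` T @^-1` cell m) = 0%E.
  apply: countable_lebesgue_measure0.
  apply: (sub_countable (subset_card_le _) countable_Pt).
  move=> x [cj cm]; apply: contrapT => nP; apply: hno; by exists x.
by rewrite /= mul0r.
Qed.

Lemma grid (N : nat -> nat) k : cond2 R Lam N -> (1 <= k)%N ->
  (0 < N k)%N /\ forall j, (j <= l)%N -> exists M : nat, a j = M%:R / (N k)%:R.
Proof.
case=> N1 Hs Ha hk.
have hd : (N 1 %| N k)%N /\ (0 < N k)%N.
  elim: k hk => // k IH; rewrite ltnS leq_eqVlt => /orP[/eqP <-|hk]; first by rewrite dvdnn.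
  have [d1 p1] := IH hk; have [d2 p2] := Hs k hk.
  by split; [exact: dvdn_trans d1 d2 | exact: ltn_trans p1 p2].
case: hd => [/dvdnP[q eq] pk]; split => // j hj.
have [m em] := Ha j hj; exists (m * q)%N; rewrite em eq !natrM.
have q0 : (q%:R : R) != 0 by rewrite pnatr_eq0; apply/eqP => q0; move: pk; rewrite eq q0.
have n0 : ((N 1)%:R : R) != 0 by rewrite pnatr_eq0 -lt0n.
by field; apply/andP.
Qed.

Lemma nat_le_half (M j : nat) : (M%:R : R) <= j%:R + 2^-1 -> (M <= j)%N.
Proof.
move=> h; rewrite leqNgt; apply/negP => hj.
have : ((j.+1)%:R : R) <= M%:R by rewrite ler_nat.
rewrite -addn1 natrD => h2; lra.
Qed.

Lemma nat_ge_half (M j : nat) : j%:R + 2^-1 <= (M%:R : R) -> (j.+1 <= M)%N.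
Proof.
move=> h; rewrite ltnNge; apply/negP => hj.
have : (M%:R : R) <= j%:R by rewrite ler_nat.
move=> h2; lra.
Qed.

Lemma cell_branch (N : nat -> nat) k : cond2 R Lam N -> (1 <= k)%N ->
  forall j : 'I_(N k), exists p : 'I_l,
    forall x, cell j x -> a p <= x <= a p.+1.
Proof.
move=> hc hk j; have [pk Hg] := grid hc hk.
set Nn := N k in pk Hg j *.
have Np : (0 : R) < Nn%:R by rewrite ltr0n.
pose x : R := (j%:R + 2^-1) / Nn%:R.
have hx : 0 <= x <= 1.
  apply/andP; split; first by rewrite divr_ge0 ?ltW // addr_ge0 ?ler0n //; lra.
  rewrite ler_pdivrMr // mul1r.
  have : ((j.+1)%:R : R) <= Nn%:R by rewrite ler_nat.
  rewrite -addn1 natrD; lra.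
have [p /andP[h1 h2]] := branch_ex hx.
exists p => y /andP[y1 y2].
have [M eM] := Hg p (ltnW (ltn_ord p)).
have [M' eM'] := Hg p.+1 (ltn_ord p).
rewrite eM eM' in h1 h2 *.
rewrite ler_pM2r ?invr_gt0 // in h1; rewrite ler_pM2r ?invr_gt0 // in h2.
apply/andP; split.
  apply: le_trans y1; rewrite ler_pM2r ?invr_gt0 // ler_nat; exact: nat_le_half.
apply: le_trans y2 _; rewrite ler_pM2r ?invr_gt0 // ler_nat; exact: nat_ge_half.
Qed.


Lemma cabs_real (x : R) : cabs (x%:C)%C = `|x|.
Proof. by rewrite /cabs /= expr0n /= addr0 sqrtr_sqr. Qed.

Lemma cell_dist N (i : 'I_N) (x y : R) : cell i x -> cell i y -> `|x - y| <= (N%:R)^-1.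
Proof.
rewrite /cell /= => /andP[x1 x2] /andP[y1 y2].
have e : (i.+1)%:R / N%:R - i%:R / N%:R = (N%:R : R)^-1.
  by rewrite -mulrBl -natrB // subSnn mul1r.
rewrite ler_norml; apply/andP; split; lra.
Qed.

Lemma Op_diag N (f : R -> R) :
  Op N f = diag_mx (\row_i ((N%:R * Rintegral lebesgue_measure (cell i) f)%:C)%C).
Proof.
apply/matrixP => i j; rewrite /Op !mxE.
by case: eqVneq => [->|]; rewrite ?mulr1n ?mulr0n.
Qed.

Lemma witness N (U : 'M[R[i]]_N) (j m : 'I_N) (p : 'I_l) :
  is_quantization T U -> (forall x, cell j x -> a p <= x <= a p.+1) -> U m j != 0 ->
  exists x0, cell j x0 /\ cell m ((Lam p)%:R * (x0 - a p)).
Proof.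
move=> [_ hq] hp nz.
have hB : transB T j m != 0.
  rewrite hq; apply: contra nz; rewrite sqrf_eq0 cabs_eq0; exact: id.
have [x0 [cj nP cm]] := transB_pos hB.
exists x0; split => //.
have /andP[h1 h2] := hp x0 cj.
rewrite -(@T_int p) //; apply/andP; split.
  rewrite lt_def h1 andbT; apply/negP => /eqP e; apply: nP; rewrite e.
  exact: (Pt_a (widen_ord (leqnSn l) p)).
rewrite lt_def h2 andbT; apply/negP => /eqP e; apply: nP; rewrite -e.
exact: (Pt_a (@Ordinal l.+1 p.+1 (ltn_ord p))).
Qed.

Lemma ILip_cell N (i : 'I_N) (K : R) (g : R -> R) : ILip K g ->
  forall x y, cell i x -> cell i y -> `|g x - g y| <= K * `|x - y|.
Proof. by move=> [_ h] x y cx cy; apply: h; apply: cell_sub cx || apply: cell_sub cy. Qed.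

Lemma ILip_tau_cell N (i : 'I_N) (p : 'I_l) (K : R) (g : R -> R) : ILip K g ->
  (forall x, cell i x -> a p <= x <= a p.+1) ->
  forall x y, cell i x -> cell i y ->
  `|g (tau x) - g (tau y)| <= (K * (Lam p)%:R) * `|x - y|.
Proof.
move=> [g01 h] hp x y cx cy.
rewrite (tau_branch g01 (hp x cx)) (tau_branch g01 (hp y cy)).
apply: le_trans (h _ _ (branch_range (hp x cx)) (branch_range (hp y cy))) _.
have e : (Lam p)%:R * (x - a p) - (Lam p)%:R * (y - a p) = (Lam p)%:R * (x - y) :> R by ring.
by rewrite e normrM ger0_norm ?ler0n // mulrA.
Qed.


Local Notation mu := (@lebesgue_measure R).
Local Notation Lm := (Lam_max Lam).

Lemma close N (U : 'M[R[i]]_N) (j m : 'I_N) (p : 'I_l) (K : R) (g : R -> R) :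
  is_quantization T U -> 0 <= K -> ILip K g ->
  (forall x, cell j x -> a p <= x <= a p.+1) -> U m j != 0 ->
  `|N%:R * Rintegral mu (cell m) g - N%:R * Rintegral mu (cell j) (g \o tau)|
    <= K * (Lm.+1)%:R / N%:R.
Proof.
move=> hq K0 hg hp nz.
have [x0 [cj cm]] := witness hq hp nz.
set y0 := (Lam p)%:R * (x0 - a p) in cm.
have Np : (0 : R) < N%:R by rewrite ltr0n; exact: (leq_ltn_trans (leq0n _) (ltn_ord j)).
have h1 : `|N%:R * Rintegral mu (cell m) g - g y0| <= K / N%:R.
  apply: (avg_bound (M := K)); first exact: ILip_cell hg.
  move=> z cz; apply: le_trans (ILip_cell hg cz cm) _.
  exact: (ler_wpM2l K0 (cell_dist cz cm)).
have LpL : ((Lam p)%:R : R) <= Lm%:R by rewrite ler_nat; exact: Lam_le.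
have h2 : `|N%:R * Rintegral mu (cell j) (g \o tau) - g y0| <= K * Lm%:R / N%:R.
  apply: (avg_bound (M := K * (Lam p)%:R)); first exact: ILip_tau_cell hg hp.
  move=> x cx /=; case: hg => g01 hgL.
  rewrite (tau_branch g01 (hp x cx)).
  apply: le_trans (hgL _ _ (branch_range (hp x cx)) (branch_range (hp x0 cj))) _.
  have e : (Lam p)%:R * (x - a p) - (Lam p)%:R * (x0 - a p) = (Lam p)%:R * (x - x0) :> R by ring.
  rewrite e normrM ger0_norm ?ler0n // -mulrA ler_wpM2l //.
  apply: ler_pM; rewrite ?ler0n ?normr_ge0 //.
  exact: (cell_dist cx cj).
have := ler_distD (g y0) (N%:R * Rintegral mu (cell m) g) (N%:R * Rintegral mu (cell j) (g \o tau)).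
rewrite (distrC (g y0)) => d.
apply: le_trans d _; apply: le_trans (lerD h1 h2) _.
rewrite -natr1 le_eqVlt; apply/orP; left; apply/eqP; ring.
Qed.

Lemma count_card N (A : {set 'I_N}) (m0 w : nat) :
  (forall m, m \in A -> (m <= m0 + w)%N /\ (m0 <= m + w)%N) -> (#|A| <= (2 * w).+1)%N.
Proof.
move=> H.
pose f (m : 'I_N) : 'I_((2 * w).+1) := inord (m + w - m0).
have := @leq_card_in _ _ f (mem A); rewrite card_ord; apply.
move=> x y hx hy; rewrite /f => /(congr1 (@nat_of_ord _)).
have [hx1 hx2] := H x hx; have [hy1 hy2] := H y hy.
rewrite !inordK; try lia.
by move=> e; apply: ord_inj; lia.
Qed.

Lemma count_nz N (U : 'M[R[i]]_N) (j : 'I_N) (p : 'I_l) :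
  is_quantization T U -> (forall x, cell j x -> a p <= x <= a p.+1) ->
  (#|[set m | U m j != 0%R]%SET| <= (2 * Lm.+1).+1)%N.
Proof.
move=> hq hp.
have Np : (0 : R) < N%:R by rewrite ltr0n; exact: (leq_ltn_trans (leq0n _) (ltn_ord j)).
case: (pickP (fun m => U m j != 0%R)) => [m0 hm0|none]; last first.
  have -> : [set m | U m j != 0%R]%SET = finset.set0 by apply/setP => m; rewrite inE none finset.in_set0.
  by rewrite finset.cards0.
have [x0 [cj0 cm0]] := witness hq hp hm0.
apply: (@count_card _ _ m0) => m; rewrite inE => hm.
have [x [cj cm]] := witness hq hp hm.
have LpL : ((Lam p)%:R : R) <= Lm%:R by rewrite ler_nat; exact: Lam_le.
have dxy : `|(Lam p)%:R * (x - a p) - (Lam p)%:R * (x0 - a p)| <= Lm%:R / N%:R.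
  have e : (Lam p)%:R * (x - a p) - (Lam p)%:R * (x0 - a p) = (Lam p)%:R * (x - x0) :> R by ring.
  rewrite e normrM ger0_norm ?ler0n //.
  apply: ler_pM; rewrite ?ler0n ?normr_ge0 //; exact: (cell_dist cj cj0).
move: cm cm0 dxy; rewrite /cell /=.
set y := (Lam p)%:R * (x - a p); set y0 := (Lam p)%:R * (x0 - a p).
move=> /andP[c1 c2] /andP[c3 c4]; rewrite ler_norml => /andP[d1 d2].
rewrite -!(ler_nat R) !natrD -!natr1.
have e1 : (m%:R : R) / N%:R <= (m0%:R + 1 + Lm%:R) / N%:R.
  rewrite !mulrDl; rewrite -natr1 mulrDl in c4; lra.
have e2 : (m0%:R : R) / N%:R <= (m%:R + 1 + Lm%:R) / N%:R.
  rewrite !mulrDl; rewrite -natr1 mulrDl in c2; lra.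
rewrite ler_pM2r ?invr_gt0 // in e1; rewrite ler_pM2r ?invr_gt0 // in e2.
split; lra.
Qed.


Lemma step_bound (N : nat -> nat) k (U : 'M[R[i]]_(N k)) (K : R) (g : R -> R) :
  cond2 R Lam N -> (1 <= k)%N -> is_quantization T U -> 0 <= K -> ILip K g ->
  forall v, vnorm ((adj U *m Op (N k) g *m U - Op (N k) (g \o tau)) *m v)
     <= ((2 * Lm.+1).+1)%:R * (Lm.+1)%:R / (N k)%:R * K * vnorm v.
Proof.
move=> hc hk hq K0 hg v.
have [pk _] := grid hc hk.
have Np : (0 : R) < (N k)%:R by rewrite ltr0n.
rewrite !Op_diag.
have W0 : 0 <= K * (Lm.+1)%:R / (N k)%:R by rewrite !mulr_ge0 ?ler0n ?invr_ge0 ?ler0n.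
have := @step_mx R (N k) U
  (fun i => (((N k)%:R * Rintegral mu (cell i) g)%:C)%C)
  (fun i => (((N k)%:R * Rintegral mu (cell i) (g \o tau))%:C)%C)
  (K * (Lm.+1)%:R / (N k)%:R) (2 * Lm.+1).+1 hq.1 W0.
move=> h; apply: le_trans (h _ _ v) _.
- move=> m j nz; have [p hp] := cell_branch hc hk j.
  rewrite -rmorphB cabs_real; exact: close hq K0 hg hp nz.
- move=> j; have [p hp] := cell_branch hc hk j; exact: count_nz hq hp.
rewrite le_eqVlt; apply/orP; left; apply/eqP; rewrite /=; ring.
Qed.

Lemma tel_bound (N : nat -> nat) k (U : 'M[R[i]]_(N k)) (K : R) (g : R -> R) n :
  cond2 R Lam N -> (1 <= k)%N -> is_quantization T U -> 0 <= K -> ILip K g ->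
  forall v,
    vnorm ((mxpow (adj U) n *m Op (N k) g *m mxpow U n - Op (N k) (g \o iter n tau)) *m v)
      <= ((2 * Lm.+1).+1)%:R * (Lm.+1)%:R / (N k)%:R * K * (\sum_(i < n) Lm%:R ^+ i) * vnorm v.
Proof.
move=> hc hk hq K0 hg v.
have [pk _] := grid hc hk.
have := (@telescope R (N k) U tau (fun K g => 0 <= K /\ ILip K g)
   (((2 * Lm.+1).+1)%:R * (Lm.+1)%:R / (N k)%:R) Lm%:R hq.1).
move=> h; apply: h => //.
- by move=> K' g' [].
- move=> K' g' [h1 h2]; split; first by rewrite mulr_ge0 ?ler0n.
  exact: ILip_tau.
- by move=> K' g' [h1 h2] w; exact: step_bound.
Qed.


Lemma countable_meas (C : set R) : countable C -> measurable C.
Proof. by move=> cC; apply: countable_measurable => // t; exact: measurable_set1. Qed.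

Lemma countableU2 (A B : set R) : countable A -> countable B -> countable (A `|` B).
Proof.
move=> cA cB.
have -> : A `|` B = \bigcup_(b in [set: bool]) (if b then A else B).
  apply/seteqP; split => x.
    by case=> h; [exists true|exists false].
  by case=> -[] _ h; [left|right].
apply: bigcup_countable; first exact: countableP.
by move=> [] _.
Qed.

Lemma pre_countable (S : set R) : countable S ->
  countable [set x | 0 <= x <= 1 /\ S (tau x)].
Proof.
move=> cS.
apply: (sub_countable (subset_card_le (B := Pt `|`
   \bigcup_(p in [set: 'I_l]) [set a p + s / (Lam p)%:R | s in S]) _)).
  move=> x [hx hS].
  have [hP|nP] := pselect (Pt x); first by left.
  right; have [p /andP[h1 h2]] := branch_ex hx.
  have hint : a p < x < a p.+1.
    apply/andP; split.
      rewrite lt_def h1 andbT; apply/negP => /eqP e; apply: nP; rewrite e.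
      exact: (Pt_a (widen_ord (leqnSn l) p)).
    rewrite lt_def h2 andbT; apply/negP => /eqP e; apply: nP; rewrite -e.
    exact: (Pt_a (@Ordinal l.+1 p.+1 (ltn_ord p))).
  exists p => //; exists (tau x) => //.
  rewrite (tau_int hint); have L0 := Lam_gt0 p.
  by field; rewrite gt_eqF.
apply: countableU2; first exact: countable_Pt.
apply: bigcup_countable; first exact: countableP.
move=> p _; exact: (sub_countable (card_image_le _ _)).
Qed.

Lemma preI_countable i : countable [set x | 0 <= x <= 1 /\ Pt (iter i tau x)].
Proof.
elim: i => [|i IH].
  by apply: (sub_countable (subset_card_le _) countable_Pt) => x [].
apply: (sub_countable (subset_card_le _) (pre_countable IH)).
move=> x [hx hP]; split => //; split; first exact: tau_range.
by rewrite -iterSr.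
Qed.

Definition Bad n := [set x : R | 0 <= x <= 1 /\ exists i, (i < n)%N /\ Pt (iter i tau x)].

Lemma Bad_countable n : countable (Bad n).
Proof.
apply: (sub_countable (subset_card_le (B := \bigcup_(i in [set: nat])
   [set x | 0 <= x <= 1 /\ Pt (iter i tau x)]) _)).
  by move=> x [hx [i [_ hi]]]; exists i.
apply: bigcup_countable; first exact: countableP.
move=> i _; exact: preI_countable.
Qed.

Lemma iter_eq n x : (forall i, (i < n)%N -> ~ Pt (iter i tau x)) -> iter n T x = iter n tau x.
Proof.
elim: n => [//|n IH] h /=.
rewrite IH; last by move=> i hi; apply: h; exact: ltnW.
by rewrite tau_notP //; apply: h.
Qed.

Lemma measurable_fun_except (D C : set R) (phi psi : R -> R) :
  measurable D -> countable C -> measurable_fun D phi ->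
  (forall x, D x -> ~ C x -> psi x = phi x) -> measurable_fun D psi.
Proof.
move=> mD cC mphi he _ Y mY.
have mC := countable_meas cC.
have -> : D `&` psi @^-1` Y = ((D `&` phi @^-1` Y) `&` ~` C) `|` (D `&` C `&` psi @^-1` Y).
  apply/seteqP; split => x.
    move=> [Dx Yx]; have [Cx|nCx] := pselect (C x); first by right.
    by left; split => //; split => //; rewrite /preimage /= -he.
  case=> [[[Dx Yx] nCx]|[[Dx Cx] Yx]] //; split => //.
  by rewrite /preimage /= he.
apply: measurableU.
  by apply: measurableI; [exact: mphi|exact: measurableC].
apply: countable_meas; apply: (sub_countable (subset_card_le _) cC).
by move=> x [[]].
Qed.


Lemma ILip_iter (K : R) (f : R -> R) n : 0 <= K -> ILip K f ->
  ILip (K * Lm%:R ^+ n) (f \o iter n tau).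
Proof.
move=> K0 hf; elim: n => [|n IH]; first by rewrite expr0 mulr1.
have e : f \o iter n.+1 tau = (f \o iter n tau) \o tau.
  by apply: funext => x; rewrite /comp iterSr.
rewrite e exprSr mulrA; apply: ILip_tau => //.
by rewrite mulr_ge0 ?exprn_ge0 ?ler0n.
Qed.

Lemma Rint_ae N (i : 'I_N) (f : R -> R) (K : R) n : 0 <= K -> ILip K f ->
  Rintegral mu (cell i) (f \o iter n T) = Rintegral mu (cell i) (f \o iter n tau).
Proof.
move=> K0 hf; have hL := ILip_iter n K0 hf.
have mtau : measurable_fun (cell i) (f \o iter n tau).
  apply: subspace_continuous_measurable_fun; first exact: cell_meas.
  exact: (lip_within (ILip_cell hL)).
have good : forall x, cell i x -> ~ Bad n x -> (f \o iter n T) x = (f \o iter n tau) x.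
  move=> x cx nB; rewrite /= iter_eq // => k hk hP; apply: nB; split.
    exact: cell_sub cx.
  by exists k.
have mT : measurable_fun (cell i) (f \o iter n T).
  exact: (measurable_fun_except (cell_meas i) (Bad_countable n) mtau good).
rewrite /Rintegral; congr fine; apply: ae_eq_integral.
- exact: cell_meas.
- exact/measurable_EFinP.
- exact/measurable_EFinP.
exists (Bad n); split.
- exact: countable_meas (Bad_countable n).
- exact: countable_lebesgue_measure0 (Bad_countable n).
move=> x /= hx; apply: contrapT => nB; apply: hx => cx.
by have := good x cx nB; rewrite /= => ->.
Qed.

End DYN.







Local Close Scope classical_set_scope.

Lemma geom_le (R : realType) (L : R) n : 2 <= L -> \sum_(i < n) L ^+ i <= L ^+ n.
Proof.
move=> L2; elim: n => [|n IH]; first by rewrite big_ord0 expr0 ler01.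
rewrite big_ord_recr /= exprS.
have h : 0 <= L ^+ n by rewrite exprn_ge0 //; lra.
nra.
Qed.

Lemma vnorm0 (R : realType) N : vnorm (0 : 'cV[R[i]]_N) = 0.
Proof.
rewrite /vnorm big1 ?sqrtr0 // => i _; rewrite mxE /cabs ComplexField.Normc.normc0 expr0n //.
Qed.

Theorem theorem5 (R : realType) (T : R -> R) (l : nat) (Lam : 'I_l -> nat) :
  cond1 T Lam -> quantizable T Lam ->
  exists D : R,
    forall N : nat -> nat, cond2 R Lam N ->
    forall k : nat, (1 <= k)%N ->
    forall U : 'M[R[i]]_(N k), is_quantization T U ->
    forall f : R -> R, in_Lip f ->
    forall n : nat, (1 <= n)%N ->
      opnorm (mxpow (invmx U) n *m Op (N k) f *m mxpow U n
              - Op (N k) (f \o iter n T))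
      <= D * lipnorm f * ((Lam_max Lam)%:R ^+ n) / (N k)%:R.
Proof.
move=> H1 _.
set Lm := Lam_max Lam.
exists (((2 * Lm.+1).+1)%:R * (Lm.+1)%:R) => N hc k hk U hq f hf n hn.
set K := sup (lip_part f).
have K0 : 0 <= K := lipS_ge0 hf.
have hfL : ILip K f := ILip_f hf.
have [pk _] := grid hc hk.
have Np : (0 : R) < (N k)%:R by rewrite ltr0n.
have eOp : Op (N k) (f \o iter n T) = Op (N k) (f \o iter n (tau T Lam)).
  by apply/matrixP => i j; rewrite !mxE (Rint_ae H1 i n K0 hfL).
rewrite eOp (invmx_unitary hq.1).
set X := (X in opnorm X).
have L2 : (2 : R) <= Lm%:R by rewrite (ler_nat R 2); exact: Lmax_ge2 H1.
have S := geom_le n L2.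
have Kl := lipS_le hf.
apply: ge_sup.
  by exists (vnorm (X *m 0)), 0 => //=; rewrite vnorm0 ler01.
move=> _ [v hv <-].
have hb := tel_bound H1 n hc hk hq K0 hfL v.
have Hf : (f \o iter 0 (tau T Lam)) = f by [].
apply: le_trans hb _.
set c := ((2 * Lm.+1).+1)%:R * (Lm.+1)%:R : R.
have c0 : 0 <= c by rewrite mulr_ge0 ?ler0n.
have S0 : 0 <= \sum_(i < n) (Lm%:R : R) ^+ i by apply: sumr_ge0 => i _; rewrite exprn_ge0 ?ler0n.
have vn0 : 0 <= vnorm v := vnorm_ge0 v.
have iN : 0 <= ((N k)%:R : R)^-1 by rewrite invr_ge0 ltW.
rewrite -/c.
have e1 : c / (N k)%:R * K * (\sum_(i < n) Lm%:R ^+ i) * vnorm v <=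
          c / (N k)%:R * K * (\sum_(i < n) Lm%:R ^+ i).
  rewrite -[X in _ <= X]mulr1; apply: ler_wpM2l => //.
  by rewrite !mulr_ge0.
apply: le_trans e1 _.
have KS : K * (\sum_(i < n) Lm%:R ^+ i) <= lipnorm f * Lm%:R ^+ n := ler_pM K0 S0 Kl S.
rewrite (_ : c / (N k)%:R * K * (\sum_(i < n) Lm%:R ^+ i) = (c / (N k)%:R) * (K * (\sum_(i < n) Lm%:R ^+ i))); last by ring.
rewrite (_ : c * lipnorm f * Lm%:R ^+ n / (N k)%:R = (c / (N k)%:R) * (lipnorm f * Lm%:R ^+ n)); last by ring.
exact: (ler_wpM2l (mulr_ge0 c0 iN) KS).
Qed.
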